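(* Let $a_2>1$ and let $Y^{(1)},Y^{(2)}$ be independent $\chi^2_1$ random variables, and let $h$ be the density of $U=Y^{(1)}+a_2Y^{(2)}$. With $c_2=1-a_2^{-1}$, $p_0=a_2^{-1/2}$, $p_1=\tfrac12c_2p_0$, $p_2=\tfrac38c_2^2p_0$, one has $$\lim_{u\to0+}\big[h(u)h''(u)-\{h'(u)\}^2\big]=\frac{p_0p_2-p_1^2}{16}>0,$$ so $h$ is not log-concave on $(0,\infty)$, although the cdf of $U$ is. *)

(* Defs.v *)
From Stdlib Require Import Reals.
Open Scope R_scope.

(* Density of a chi^2_1 random variable (used only for y > 0). *)
Definition chi2_1_pdf (y : R) : R := / sqrt (2 * PI) * / sqrt y * exp (- y / 2).

Definition scaled_chi2_1_pdf (a s : R) : R := chi2_1_pdf (s / a) / a.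

Definition improper_int (f : R -> R) (a b I : R) : Prop :=
  (forall x y, a < x -> x <= y -> y < b -> inhabited (Riemann_integrable f x y)) /\
  (forall eps, 0 < eps -> exists delta, 0 < delta /\
     forall x y (pr : Riemann_integrable f x y),
       a < x < a + delta -> b - delta < y < b -> x <= y ->
       Rabs (RiemannInt pr - I) < eps).

(* Density of U = Y1 + a Y2 (Y1, Y2 iid chi^2_1) as the convolution
   h(u) = int_0^u f_{Y1}(t) f_{a Y2}(u - t) dt, for u > 0. *)
Definition is_density_sum (a : R) (h : R -> R) : Prop :=
  forall u, 0 < u ->
    improper_int (fun t => chi2_1_pdf t * scaled_chi2_1_pdf a (u - t)) 0 u (h u).

Definition right_lim0 (g : R -> R) (L : R) : Prop :=
  forall eps, 0 < eps -> exists delta, 0 < delta /\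
    forall u, 0 < u < delta -> Rabs (g u - L) < eps.

(* Log-concavity on (0, oo) (for positive functions). *)
Definition log_concave_pos (f : R -> R) : Prop :=
  forall x y l, 0 < x -> 0 < y -> 0 <= l <= 1 ->
    l * ln (f x) + (1 - l) * ln (f y) <= ln (f (l * x + (1 - l) * y)).

(* Main.v *)
Require Import Defs.
From Stdlib Require Import Reals Lra Psatz.
From Coquelicot Require Import Coquelicot.
Open Scope R_scope.

Definition qf (a p : R) : R := (1 - cos p) / 4 + (1 + cos p) / (4 * a).
Definition Ik (a : R) (k : nat) (u : R) : R :=
  RInt (fun p => qf a p ^ k * exp (- u * qf a p)) 0 PI.

Lemma qf_pos a p : 1 < a -> 0 < qf a p.
Proof.
  intros Ha. unfold qf. pose proof (COS_bound p).
  apply Rlt_le_trans with ((1 - cos p)/4 + (1 + cos p)/(4*a)); [|lra].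
  assert (E : (1 - cos p)/4 + (1 + cos p)/(4*a) = ((1 - cos p) * a + (1 + cos p)) / (4*a)) by (field; lra).
  rewrite E. apply Rdiv_lt_0_compat; nra.
Qed.

Lemma c2d_comp (g : R -> R) f x y :
  continuity_2d_pt f x y -> continuous g (f x y) ->
  continuity_2d_pt (fun u v => g (f u v)) x y.
Proof.
  rewrite !continuity_2d_pt_filterlim. intros H1 H2.
  eapply filterlim_comp; eauto.
Qed.

Lemma integrand_cont a k u z : continuous (fun p => qf a p ^ k * exp (- u * qf a p)) z.
Proof. apply (@ex_derive_continuous R_AbsRing R_NormedModule). unfold qf. auto_derive. auto. Qed.

Lemma ex_RInt_integrand a k u x y : ex_RInt (fun p => qf a p ^ k * exp (- u * qf a p)) x y.
Proof. apply (@ex_RInt_continuous R_CompleteNormedModule). intros; apply integrand_cont. Qed.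

Lemma Ik_derive a k u : is_derive (Ik a k) u (- Ik a (S k) u).
Proof.
  unfold Ik.
  assert (HD : forall z v, Derive (fun z => qf a v ^ k * exp (- z * qf a v)) z
                        = - (qf a v ^ (S k) * exp (- z * qf a v))).
  { intros z v. apply is_derive_unique. auto_derive; auto. simpl; ring. }
  replace (- RInt (fun p => qf a p ^ S k * exp (- u * qf a p)) 0 PI)
    with (RInt (fun p => - (qf a p ^ S k * exp (- u * qf a p))) 0 PI).
  2: { exact (RInt_opp (V:=R_CompleteNormedModule) (fun p => qf a p ^ S k * exp (- u * qf a p)) 0 PI (ex_RInt_integrand a (S k) u 0 PI)). }
  erewrite <- RInt_ext.
  2: { intros x _. rewrite HD. reflexivity. }
  apply (is_derive_RInt_param (fun z p => qf a p ^ k * exp (- z * qf a p))).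
  - apply filter_forall. intros z t _. auto_derive. auto.
  - intros t _. eapply continuity_2d_pt_ext.
    { intros; symmetry; apply HD. }
    apply continuity_2d_pt_opp. apply continuity_2d_pt_mult.
    + apply (c2d_comp (fun x => x ^ S k) (fun u v => qf a v)).
      * apply (c2d_comp (qf a) (fun u v => v)). apply continuity_2d_pt_id2.
        apply (@ex_derive_continuous R_AbsRing R_NormedModule). unfold qf. auto_derive. auto.
      * apply (@ex_derive_continuous R_AbsRing R_NormedModule). auto_derive. auto.
    + apply (c2d_comp exp (fun u v => - u * qf a v)).
      * apply continuity_2d_pt_mult. apply continuity_2d_pt_opp, continuity_2d_pt_id1.
        apply (c2d_comp (qf a) (fun u v => v)). apply continuity_2d_pt_id2.
        apply (@ex_derive_continuous R_AbsRing R_NormedModule). unfold qf. auto_derive. auto.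
      * apply (@ex_derive_continuous R_AbsRing R_NormedModule). auto_derive. auto.
  - apply filter_forall. intros; apply ex_RInt_integrand.
Qed.

Definition Kc (a : R) := / (2 * PI * sqrt a).
Definition fint (a u t : R) := chi2_1_pdf t * scaled_chi2_1_pdf a (u - t).
Definition gs (u p : R) := u * (1 - cos p) / 2.

Lemma cos_open p : 0 < p < PI -> -1 < cos p < 1 /\ 0 < sin p.
Proof.
  intros Hp. pose proof (sin_gt_0 p (proj1 Hp) (proj2 Hp)).
  pose proof (sin2_cos2 p). unfold Rsqr in *. split; [split|]; nra.
Qed.

Lemma integrand_id a u p : 1 < a -> 0 < u -> 0 < p < PI ->
  (u * sin p / 2) * fint a u (gs u p) = Kc a * (qf a p ^ 0 * exp (- u * qf a p)).
Proof.
  intros Ha Hu Hp. destruct (cos_open p Hp) as [[Hc1 Hc2] Hs].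
  pose proof (sin2_cos2 p) as Hsc. unfold Rsqr in Hsc.
  unfold fint, chi2_1_pdf, scaled_chi2_1_pdf, Kc, gs.
  set (c := cos p) in *. set (s := sin p) in *.
  set (t := u * (1 - c) / 2).
  assert (Ht : 0 < t) by (unfold t; nra).
  assert (Hut : 0 < (u - t) / a) by (unfold t; apply Rdiv_lt_0_compat; nra).
  assert (Hr : 0 < sqrt a) by (apply sqrt_lt_R0; lra).
  assert (ra : sqrt a * sqrt a = a) by (apply sqrt_sqrt; lra).
  set (r := sqrt a) in *.
  assert (H1 : sqrt t * sqrt ((u - t) / a) = u * s / (2 * r)).
  { rewrite <- sqrt_mult by lra. apply sqrt_lem_1.
    - nra.
    - apply Rmult_le_pos; [nra|]. apply Rlt_le, Rinv_0_lt_compat; lra.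
    - unfold t. rewrite <- ra. field_simplify; [|lra|lra].
      replace (s ^ 2) with (1 - c ^ 2) by nra. field. lra. }
  assert (H2 : sqrt (2 * PI) * sqrt (2 * PI) = 2 * PI) by (apply sqrt_sqrt; pose proof PI_RGT_0; lra).
  assert (H3 : exp (- t / 2) * exp (- ((u - t) / a) / 2) = exp (- u * qf a p)).
  { rewrite <- exp_plus. f_equal. unfold qf, t. fold c. field. lra. }
  assert (Hst : 0 < sqrt t) by (apply sqrt_lt_R0; lra).
  assert (Hsv : 0 < sqrt ((u - t) / a)) by (apply sqrt_lt_R0; lra).
  assert (HS : 0 < sqrt (2 * PI)) by (apply sqrt_lt_R0; pose proof PI_RGT_0; lra).
  pose proof PI_RGT_0.
  transitivity ((u * s / 2) * / (sqrt (2 * PI) * sqrt (2 * PI)) * / (sqrt t * sqrt ((u - t) / a)) / a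
                * (exp (- t / 2) * exp (- ((u - t) / a) / 2))).
  { unfold chi2_1_pdf. field. repeat split; lra. }
  rewrite H1, H2, H3.
  clearbody r. subst a. simpl. field. repeat split; lra.
Qed.

Lemma fint_cont a u t : 1 < a -> 0 < t < u -> continuous (fint a u) t.
Proof.
  intros Ha Ht. apply (@ex_derive_continuous R_AbsRing R_NormedModule).
  unfold fint, scaled_chi2_1_pdf, chi2_1_pdf.
  assert (0 < (u - t) / a) by (apply Rdiv_lt_0_compat; lra).
  auto_derive. repeat split; try lra.
  all: try (apply Rgt_not_eq, sqrt_lt_R0; lra).
  all: try (apply Rgt_not_eq, sqrt_lt_R0; pose proof PI_RGT_0; lra).
Qed.

Lemma sub_int a u p1 p2 : 1 < a -> 0 < u -> 0 < p1 -> p1 <= p2 -> p2 < PI ->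
  RInt (fint a u) (gs u p1) (gs u p2) = Kc a * RInt (fun p => qf a p ^ 0 * exp (- u * qf a p)) p1 p2.
Proof.
  intros Ha Hu H1 H12 H2.
  assert (Hc : forall x, Rmin p1 p2 <= x <= Rmax p1 p2 -> continuous (fint a u) (gs u x)).
  { intros x Hx. rewrite Rmin_left in Hx by lra. rewrite Rmax_right in Hx by lra.
    apply fint_cont; auto. destruct (cos_open x) as [[? ?] ?]; [lra|]. unfold gs; split; nra. }
  assert (Hd : forall x, Rmin p1 p2 <= x <= Rmax p1 p2 ->
     is_derive (gs u) x ((fun p => u * sin p / 2) x) /\ continuous (fun p => u * sin p / 2) x).
  { intros x _. split.
    + unfold gs. auto_derive; auto. simpl. lra.
    + apply (@ex_derive_continuous R_AbsRing R_NormedModule). auto_derive. auto. }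
  rewrite <- (is_RInt_unique _ _ _ _ (is_RInt_comp (fint a u) (gs u) (fun p => u * sin p / 2) p1 p2 Hc Hd)).
  rewrite <- (RInt_scal (V:=R_CompleteNormedModule)); [| apply ex_RInt_integrand].
  apply RInt_ext. intros x Hx. rewrite Rmin_left in Hx by lra. rewrite Rmax_right in Hx by lra.
  apply (integrand_id a u x Ha Hu). lra.
Qed.

Lemma close_eq x y : (forall e, 0 < e -> Rabs (x - y) < e) -> x = y.
Proof.
  intros H. destruct (Req_dec (x - y) 0) as [E|E]; [lra|].
  specialize (H (Rabs (x - y)) (Rabs_pos_lt _ E)). lra.
Qed.

Lemma RInt_const_R (c x y : R) : RInt (fun _ => c) x y = (y - x) * c.
Proof. rewrite (RInt_const (V:=R_CompleteNormedModule)). reflexivity. Qed.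

Lemma int0_bound a u x y : 1 < a -> 0 <= u -> x <= y ->
  0 <= RInt (fun p => qf a p ^ 0 * exp (- u * qf a p)) x y <= y - x.
Proof.
  intros Ha Hu Hxy. split.
  - apply Rle_trans with (RInt (fun _ => 0) x y).
    + rewrite RInt_const_R. lra.
    + apply RInt_le; auto. apply ex_RInt_const. apply ex_RInt_integrand.
      intros z _. simpl. pose proof (exp_pos (- u * qf a z)). lra.
  - apply Rle_trans with (RInt (fun _ => 1) x y).
    + apply RInt_le; auto. apply ex_RInt_integrand. apply ex_RInt_const.
      intros z _. simpl. rewrite Rmult_1_l. rewrite <- exp_0. pose proof (qf_pos a z Ha).
      destruct (Rle_lt_or_eq_dec (- u * qf a z) 0) as [L|L]; [nra| |rewrite L; lra].
      apply Rlt_le, exp_increasing, L.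
    + rewrite RInt_const_R. lra.
Qed.

Lemma Kc_pos a : 1 < a -> 0 < Kc a.
Proof.
  intros Ha. unfold Kc. apply Rinv_0_lt_compat.
  pose proof PI_RGT_0. assert (0 < sqrt a) by (apply sqrt_lt_R0; lra). nra.
Qed.

Lemma h_eq a h u : 1 < a -> is_density_sum a h -> 0 < u -> h u = Kc a * Ik a 0 u.
Proof.
  intros Ha hh Hu. apply close_eq. intros eps Heps.
  set (e := eps / 2).
  destruct (hh u Hu) as [Hint Hlim].
  destruct (Hlim e ltac:(unfold e; lra)) as [d1 [Hd1 Hd1']].
  pose proof (Kc_pos a Ha) as HK. pose proof PI_RGT_0 as HPI.
  set (f0 := Rmin (PI / 4) (e / (2 * Kc a))).
  assert (Hf0 : 0 < f0) by (unfold f0; apply Rmin_glb_lt; [lra|]; apply Rdiv_lt_0_compat; unfold e; lra).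
  assert (Hf0a : f0 <= PI / 4) by apply Rmin_l.
  assert (Hf0b : f0 <= e / (2 * Kc a)) by apply Rmin_r.
  assert (Hcf : 0 < cos f0) by (apply cos_gt_0; lra).
  assert (Hcf1 : cos f0 < 1) by (rewrite <- cos_0; apply cos_decreasing_1; lra).
  set (d := Rmin d1 (gs u f0)).
  assert (Hg : 0 < gs u f0 < u / 2) by (unfold gs; split; nra).
  assert (Hd : 0 < d) by (unfold d; apply Rmin_glb_lt; lra).
  assert (Hdd1 : d <= d1) by apply Rmin_l.
  assert (Hdg : d <= gs u f0) by apply Rmin_r.
  set (x := d / 2). set (y := u - d / 2).
  assert (Ex : x = d / 2) by reflexivity. assert (Ey : y = u - d / 2) by reflexivity.
  assert (Hxy : x <= y) by (unfold x, y; lra).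
  destruct (Hint x y ltac:(unfold x; lra) Hxy ltac:(unfold y; lra)) as [pr].
  specialize (Hd1' x y pr ltac:(unfold x; lra) ltac:(unfold y; lra) Hxy).
  set (p1 := acos (1 - 2 * x / u)). set (p2 := acos (1 - 2 * y / u)).
  assert (Bx : -1 <= 1 - 2 * x / u <= 1).
  { unfold x. split; apply Rmult_le_reg_r with u; auto; field_simplify; lra. }
  assert (By : -1 <= 1 - 2 * y / u <= 1).
  { unfold y. split; apply Rmult_le_reg_r with u; auto; field_simplify; lra. }
  assert (Gp1 : gs u p1 = x) by (unfold gs, p1; rewrite cos_acos; auto; field; lra).
  assert (Gp2 : gs u p2 = y) by (unfold gs, p2; rewrite cos_acos; auto; field; lra).
  pose proof (acos_bound (1 - 2 * x / u)) as Ab1. fold p1 in Ab1.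
  pose proof (acos_bound (1 - 2 * y / u)) as Ab2. fold p2 in Ab2.
  assert (Hc1 : cos p1 = 1 - 2 * x / u) by (unfold p1; rewrite cos_acos; auto).
  assert (Hc2 : cos p2 = 1 - 2 * y / u) by (unfold p2; rewrite cos_acos; auto).
  assert (Hx2 : 2 * x / u > 0) by (unfold x; apply Rdiv_lt_0_compat; lra).
  assert (Hy2 : 2 * y / u < 2).
  { apply Rmult_lt_reg_r with u; auto. unfold Rdiv. rewrite Rmult_assoc, Rinv_l by lra. unfold y. lra. }
  assert (P1pos : 0 < p1).
  { destruct (Rle_lt_or_eq_dec 0 p1 (proj1 Ab1)) as [L|L]; [auto|]. rewrite <- L, cos_0 in Hc1. lra. }
  assert (P2lt : p2 < PI).
  { destruct (Rle_lt_or_eq_dec p2 PI (proj2 Ab2)) as [L|L]; [auto|]. rewrite L, cos_PI in Hc2. lra. }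
  assert (P12 : p1 <= p2).
  { destruct (Rle_or_lt p1 p2) as [L|L]; auto.
    pose proof (cos_decreasing_1 p2 p1 ltac:(lra) ltac:(lra) ltac:(lra) ltac:(lra) L).
    assert (2 * x / u <= 2 * y / u) by (unfold Rdiv; apply Rmult_le_compat_r; [left; apply Rinv_0_lt_compat|]; lra).
    lra. }
  assert (P1f : p1 < f0).
  { destruct (Rle_or_lt f0 p1) as [L|L]; auto.
    assert (cos p1 <= cos f0).
    { destruct (Rle_lt_or_eq_dec _ _ L) as [L'|L']; [|rewrite L'; lra].
      left; apply cos_decreasing_1; lra. }
    assert (gs u f0 <= gs u p1) by (unfold gs; nra). lra. }
  assert (P2f : PI - f0 < p2).
  { destruct (Rle_or_lt p2 (PI - f0)) as [L|L]; auto.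
    assert (cos (PI - f0) <= cos p2).
    { destruct (Rle_lt_or_eq_dec _ _ L) as [L'|L']; [|rewrite L'; lra].
      left; apply cos_decreasing_1; lra. }
    rewrite Rtrigo_facts.cos_pi_minus in H.
    assert (gs u p2 <= u - gs u f0) by (unfold gs; nra). lra. }
  set (F0 := fun p => qf a p ^ 0 * exp (- u * qf a p)).
  assert (E1 : RiemannInt pr = Kc a * RInt F0 p1 p2).
  { rewrite <- RInt_Reals. change (RInt (fint a u) x y = Kc a * RInt F0 p1 p2).
    rewrite <- Gp1, <- Gp2. apply sub_int; auto. }
  assert (E2 : Ik a 0 u = RInt F0 0 p1 + RInt F0 p1 p2 + RInt F0 p2 PI).
  { unfold Ik. fold F0.
    rewrite <- (RInt_Chasles (V:=R_CompleteNormedModule) F0 0 p1 PI) by apply ex_RInt_integrand.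
    rewrite <- (RInt_Chasles (V:=R_CompleteNormedModule) F0 p1 p2 PI) by apply ex_RInt_integrand.
    unfold plus; simpl. ring. }
  pose proof (int0_bound a u 0 p1 Ha ltac:(lra) ltac:(lra)).
  pose proof (int0_bound a u p2 PI Ha ltac:(lra) ltac:(lra)).
  fold F0 in H, H0.
  assert (Kc a * (p1 + (PI - p2)) <= e).
  { apply Rle_trans with (Kc a * (2 * f0)). apply Rmult_le_compat_l; lra.
    apply Rmult_le_reg_r with (/ (2 * Kc a)). apply Rinv_0_lt_compat; lra.
    replace (Kc a * (2 * f0) * / (2 * Kc a)) with f0 by (field; lra). exact Hf0b. }
  rewrite E1 in Hd1'. rewrite E2.
  apply Rabs_def1; apply Rabs_def2 in Hd1'; destruct Hd1'; unfold e in *; nra.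
Qed.

Lemma Ik_derive_c a c k u : is_derive (fun u => c * Ik a k u) u (c * - Ik a (S k) u).
Proof.
  apply is_derive_ext with (fun u => scal (Ik a k u) c).
  { intros t. unfold scal; simpl. unfold mult; simpl. ring. }
  replace (c * - Ik a (S k) u) with (scal (- Ik a (S k) u) c) by (unfold scal; simpl; unfold mult; simpl; ring).
  apply (@is_derive_scal_l R_AbsRing R_NormedModule). apply Ik_derive.
Qed.

Lemma Ik_cont a k u : continuity_pt (Ik a k) u.
Proof.
  apply continuity_pt_filterlim.
  apply (@ex_derive_continuous R_AbsRing R_NormedModule).
  eexists. apply Ik_derive.
Qed.

Lemma Ik_pos a k u : 1 < a -> 0 < Ik a k u.
Proof.
  intros Ha. unfold Ik. apply RInt_gt_0. apply PI_RGT_0.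
  - intros x _. apply Rmult_lt_0_compat. apply pow_lt, qf_pos; auto. apply exp_pos.
  - intros; apply integrand_cont.
Qed.

Lemma Ik_val a k (F : R -> R) (P : R -> R) :
  (forall x, is_derive F x (P x)) -> (forall x, continuous P x) ->
  (forall x, P x = qf a x ^ k) -> Ik a k 0 = F PI - F 0.
Proof.
  intros HF HP HE. unfold Ik.
  rewrite (RInt_ext _ P).
  - apply is_RInt_unique. apply (@is_RInt_derive R_CompleteNormedModule); intros; auto.
  - intros x _. rewrite HE. rewrite Ropp_0, Rmult_0_l, exp_0, Rmult_1_r. reflexivity.
Qed.

Lemma I0_0 a : Ik a 0 0 = PI.
Proof.
  rewrite (Ik_val a 0 (fun x => x) (fun x => 1)).
  - ring.
  - intros x. auto_derive; auto.
  - intros x. apply continuous_const.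
  - intros x. simpl. reflexivity.
Qed.

Lemma I1_0 a : 1 < a -> Ik a 1 0 = PI * (1 + / a) / 4.
Proof.
  intros Ha.
  set (A := (1 + / a) / 4). set (B := (/ a - 1) / 4).
  rewrite (Ik_val a 1 (fun x => A * x + B * sin x) (fun x => A + B * cos x)).
  - rewrite sin_PI, sin_0. unfold A. field. lra.
  - intros x. auto_derive; auto. ring.
  - intros x. apply (@ex_derive_continuous R_AbsRing R_NormedModule). auto_derive. auto.
  - intros x. unfold qf, A, B. field. lra.
Qed.

Lemma I2_0 a : 1 < a -> Ik a 2 0 = PI * ((1 + / a) / 4) ^ 2 + PI * ((/ a - 1) / 4) ^ 2 / 2.
Proof.
  intros Ha.
  set (A := (1 + / a) / 4). set (B := (/ a - 1) / 4).
  rewrite (Ik_val a 2 (fun x => A ^ 2 * x + 2 * A * B * sin x + B ^ 2 * (x / 2 + sin x * cos x / 2))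
                      (fun x => (A + B * cos x) ^ 2)).
  - rewrite sin_PI, sin_0. field.
  - intros x. auto_derive; auto. pose proof (sin2_cos2 x). unfold Rsqr in H. nra.
  - intros x. apply (@ex_derive_continuous R_AbsRing R_NormedModule). auto_derive. auto.
  - intros x. unfold qf, A, B. field. lra.
Qed.

Lemma midpoint_convex (f f1 f2 : R -> R) m t : 0 < t ->
  (forall x, m - t <= x <= m + t ->
     derivable_pt_lim f x (f1 x) /\ derivable_pt_lim f1 x (f2 x) /\ 0 < f2 x) ->
  2 * f m < f (m - t) + f (m + t).
Proof.
  intros Ht H.
  destruct (MVT_cor2 f f1 (m - t) m ltac:(lra)) as [c1 [E1 B1]].
  { intros c Hc. apply H. lra. }
  destruct (MVT_cor2 f f1 m (m + t) ltac:(lra)) as [c2 [E2 B2]].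
  { intros c Hc. apply H. lra. }
  destruct (MVT_cor2 f1 f2 c1 c2 ltac:(lra)) as [c3 [E3 B3]].
  { intros c Hc. apply H. lra. }
  assert (0 < f2 c3) by (apply H; lra).
  assert (0 < f1 c2 - f1 c1) by (rewrite E3; apply Rmult_lt_0_compat; lra).
  replace (m - (m - t)) with t in E1 by ring.
  replace (m + t - m) with t in E2 by ring.
  nra.
Qed.

Definition Gf a u := Kc a * Ik a 0 u.

Lemma Gf_derive a u : derivable_pt_lim (Gf a) u (Kc a * - Ik a 1 u).
Proof. apply is_derive_Reals. apply Ik_derive_c. Qed.

Lemma Gf_cont a u : continuous (Gf a) u.
Proof.
  apply (@ex_derive_continuous R_AbsRing R_NormedModule).
  eexists. apply is_derive_Reals. apply Gf_derive.
Qed.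

Lemma ex_RInt_Gf a x y : ex_RInt (Gf a) x y.
Proof. apply (@ex_RInt_continuous R_CompleteNormedModule). intros; apply Gf_cont. Qed.

Lemma Gf_pos a u : 1 < a -> 0 < Gf a u.
Proof. intros Ha. unfold Gf. apply Rmult_lt_0_compat. apply Kc_pos; auto. apply Ik_pos; auto. Qed.

Lemma Gf_decr a x y : 1 < a -> x <= y -> Gf a y <= Gf a x.
Proof.
  intros Ha Hxy. destruct (Rle_lt_or_eq_dec _ _ Hxy) as [L|L]; [|subst; lra].
  destruct (MVT_cor2 (Gf a) (fun u => Kc a * - Ik a 1 u) x y L) as [c [E _]].
  { intros; apply Gf_derive. }
  pose proof (Kc_pos a Ha). pose proof (Ik_pos a 1 c Ha). assert (0 < Kc a * Ik a 1 c * (y - x)) by (repeat apply Rmult_lt_0_compat; lra). lra.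
Qed.

Lemma Gf_bound a u : 1 < a -> 0 <= u -> Gf a u <= Kc a * PI.
Proof.
  intros Ha Hu. unfold Gf. apply Rmult_le_compat_l. left; apply Kc_pos; auto.
  pose proof (int0_bound a u 0 PI Ha Hu (Rlt_le _ _ PI_RGT_0)). unfold Ik. lra.
Qed.

Lemma RInt_Gf_bound a x y : 1 < a -> 0 <= x <= y -> 0 <= RInt (Gf a) x y <= (y - x) * (Kc a * PI).
Proof.
  intros Ha Hxy. split.
  - apply RInt_ge_0. lra. apply ex_RInt_Gf. intros; left; apply Gf_pos; auto.
  - rewrite <- RInt_const_R. apply RInt_le. lra. apply ex_RInt_Gf. apply ex_RInt_const.
    intros; apply Gf_bound; lra.
Qed.

Lemma RI_eq a h x y (pr : Riemann_integrable h x y) : 1 < a -> is_density_sum a h ->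
  0 < x -> x <= y -> RiemannInt pr = RInt (Gf a) x y.
Proof.
  intros Ha hh Hx Hxy. rewrite <- RInt_Reals. apply RInt_ext.
  intros t Ht. rewrite Rmin_left in Ht by lra. unfold Gf. apply h_eq; auto. lra.
Qed.

Lemma Chasles_R (f : R -> R) x y z : ex_RInt f x y -> ex_RInt f y z ->
  RInt f x y + RInt f y z = RInt f x z.
Proof. intros. rewrite <- (RInt_Chasles (V:=R_CompleteNormedModule) f x y z); auto. Qed.

Lemma F_diff a h F v w : 1 < a -> is_density_sum a h ->
  (forall u, 0 < u -> improper_int h 0 u (F u)) -> 0 < v -> 0 < w ->
  F v - F w = RInt (Gf a) w v.
Proof.
  intros Ha hh HF Hv Hw. apply close_eq. intros eps He.
  set (M := Kc a * PI + 1).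
  assert (HM : 0 < M) by (unfold M; pose proof (Kc_pos a Ha); pose proof PI_RGT_0; nra).
  destruct (HF v Hv) as [Iv Lv]. destruct (Lv (eps / 4) ltac:(lra)) as [dv [Hdv Hdv']].
  destruct (HF w Hw) as [Iw Lw]. destruct (Lw (eps / 4) ltac:(lra)) as [dw [Hdw Hdw']].
  set (d := Rmin (Rmin dv dw) (Rmin (Rmin (v / 2) (w / 2)) (eps / (4 * M)))).
  assert (Hd0 : 0 < d).
  { unfold d. repeat apply Rmin_glb_lt; try lra. apply Rdiv_lt_0_compat; lra. }
  assert (Hd1 : d <= dv) by (unfold d; eapply Rle_trans; [apply Rmin_l|apply Rmin_l]).
  assert (Hd2 : d <= dw) by (unfold d; eapply Rle_trans; [apply Rmin_l|apply Rmin_r]).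
  assert (Hd3 : d <= v / 2) by (unfold d; eapply Rle_trans; [apply Rmin_r|]; eapply Rle_trans; [apply Rmin_l|apply Rmin_l]).
  assert (Hd4 : d <= w / 2) by (unfold d; eapply Rle_trans; [apply Rmin_r|]; eapply Rle_trans; [apply Rmin_l|apply Rmin_r]).
  assert (Hd5 : d <= eps / (4 * M)) by (unfold d; eapply Rle_trans; [apply Rmin_r|apply Rmin_r]).
  assert (HdM : d * M <= eps / 4).
  { apply Rmult_le_reg_r with (/ M). apply Rinv_0_lt_compat; lra.
    replace (d * M * / M) with d by (field; lra).
    replace (eps / 4 * / M) with (eps / (4 * M)) by (field; lra). auto. }
  assert (HKM : Kc a * PI <= M) by (unfold M; lra).
  destruct (Iv (d / 2) (v - d / 2) ltac:(lra) ltac:(lra) ltac:(lra)) as [prv].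
  destruct (Iw (d / 2) (w - d / 2) ltac:(lra) ltac:(lra) ltac:(lra)) as [prw].
  specialize (Hdv' _ _ prv ltac:(lra) ltac:(lra) ltac:(lra)).
  specialize (Hdw' _ _ prw ltac:(lra) ltac:(lra) ltac:(lra)).
  rewrite (RI_eq a h) in Hdv', Hdw' by (auto; lra).
  pose proof (Chasles_R (Gf a) (d / 2) (v - d / 2) v (ex_RInt_Gf _ _ _) (ex_RInt_Gf _ _ _)).
  pose proof (Chasles_R (Gf a) (d / 2) (w - d / 2) w (ex_RInt_Gf _ _ _) (ex_RInt_Gf _ _ _)).
  pose proof (Chasles_R (Gf a) (d / 2) w v (ex_RInt_Gf _ _ _) (ex_RInt_Gf _ _ _)).
  pose proof (RInt_Gf_bound a (v - d / 2) v Ha ltac:(lra)).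
  pose proof (RInt_Gf_bound a (w - d / 2) w Ha ltac:(lra)).
  replace (v - (v - d / 2)) with (d / 2) in H2 by ring.
  replace (w - (w - d / 2)) with (d / 2) in H3 by ring.
  assert (d / 2 * (Kc a * PI) <= eps / 8).
  { apply Rle_trans with (d / 2 * M). apply Rmult_le_compat_l; lra. lra. }
  apply Rabs_def2 in Hdv'. apply Rabs_def2 in Hdw'.
  apply Rabs_def1; lra.
Qed.

Lemma F_pos a h F v : 1 < a -> is_density_sum a h ->
  (forall u, 0 < u -> improper_int h 0 u (F u)) -> 0 < v -> 0 < F v.
Proof.
  intros Ha hh HF Hv.
  pose proof (Gf_pos a v Ha) as HG.
  destruct (HF v Hv) as [Iv Lv].
  destruct (Lv (v * Gf a v / 4) ltac:(nra)) as [dv [Hdv Hdv']].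
  set (d := Rmin dv (v / 2)).
  assert (Hd0 : 0 < d) by (unfold d; apply Rmin_glb_lt; lra).
  assert (Hd1 : d <= dv) by apply Rmin_l.
  assert (Hd2 : d <= v / 2) by apply Rmin_r.
  destruct (Iv (d / 2) (v - d / 2) ltac:(lra) ltac:(lra) ltac:(lra)) as [prv].
  specialize (Hdv' _ _ prv ltac:(lra) ltac:(lra) ltac:(lra)).
  rewrite (RI_eq a h) in Hdv' by (auto; lra).
  assert (RInt (fun _ => Gf a v) (d / 2) (v - d / 2) <= RInt (Gf a) (d / 2) (v - d / 2)).
  { apply RInt_le. lra. apply ex_RInt_const. apply ex_RInt_Gf.
    intros; apply Gf_decr; auto; lra. }
  rewrite RInt_const_R in H.
  assert (v / 2 * Gf a v <= (v - d / 2 - d / 2) * Gf a v) by (apply Rmult_le_compat_r; lra).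
  apply Rabs_def2 in Hdv'. nra.
Qed.

Lemma F_tangent a h F v z : 1 < a -> is_density_sum a h ->
  (forall u, 0 < u -> improper_int h 0 u (F u)) -> 0 < v -> 0 < z ->
  F v <= F z + (v - z) * Gf a z.
Proof.
  intros Ha hh HF Hv Hz. destruct (Rle_or_lt z v) as [L|L].
  - pose proof (F_diff a h F v z Ha hh HF Hv Hz).
    assert (RInt (Gf a) z v <= RInt (fun _ => Gf a z) z v).
    { apply RInt_le. lra. apply ex_RInt_Gf. apply ex_RInt_const.
      intros; apply Gf_decr; auto; lra. }
    rewrite RInt_const_R in H0. lra.
  - pose proof (F_diff a h F z v Ha hh HF Hz Hv).
    assert (RInt (fun _ => Gf a z) v z <= RInt (Gf a) v z).
    { apply RInt_le. lra. apply ex_RInt_const. apply ex_RInt_Gf.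
      intros; apply Gf_decr; auto; lra. }
    rewrite RInt_const_R in H0. lra.
Qed.

Lemma ln_tangent s t : 0 < s -> 0 < t -> ln t <= ln s + (t - s) / s.
Proof.
  intros Hs Ht. pose proof (exp_ineq1_le (ln (t / s))).
  rewrite exp_ln in H by (apply Rdiv_lt_0_compat; auto).
  rewrite ln_div in H by auto.
  replace ((t - s) / s) with (t / s - 1) by (field; lra). lra.
Qed.

Lemma F_logconcave a h F : 1 < a -> is_density_sum a h ->
  (forall u, 0 < u -> improper_int h 0 u (F u)) -> log_concave_pos F.
Proof.
  intros Ha hh HF x y l Hx Hy Hl.
  set (z := l * x + (1 - l) * y).
  assert (Hz : 0 < z) by (unfold z; destruct (Rle_lt_or_eq_dec 0 l (proj1 Hl)); nra).
  pose proof (F_tangent a h F x z Ha hh HF Hx Hz) as T1.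
  pose proof (F_tangent a h F y z Ha hh HF Hy Hz) as T2.
  pose proof (F_pos a h F x Ha hh HF Hx). pose proof (F_pos a h F y Ha hh HF Hy).
  pose proof (F_pos a h F z Ha hh HF Hz).
  pose proof (ln_tangent (F z) (F x) H1 H). pose proof (ln_tangent (F z) (F y) H1 H0).
  assert (Hsum : l * F x + (1 - l) * F y <= F z).
  { assert (l * F x <= l * (F z + (x - z) * Gf a z)) by (apply Rmult_le_compat_l; lra).
    assert ((1 - l) * F y <= (1 - l) * (F z + (y - z) * Gf a z)) by (apply Rmult_le_compat_l; lra).
    assert (l * (x - z) + (1 - l) * (y - z) = 0) by (unfold z; ring). nra. }
  assert (l * ln (F x) <= l * (ln (F z) + (F x - F z) / F z)) by (apply Rmult_le_compat_l; lra).
  assert ((1 - l) * ln (F y) <= (1 - l) * (ln (F z) + (F y - F z) / F z)) by (apply Rmult_le_compat_l; lra).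
  assert (l * ((F x - F z) / F z) + (1 - l) * ((F y - F z) / F z) <= 0).
  { replace (l * ((F x - F z) / F z) + (1 - l) * ((F y - F z) / F z))
      with ((l * F x + (1 - l) * F y - F z) / F z) by (field; lra).
    unfold Rdiv. assert (0 < / F z) by (apply Rinv_0_lt_compat; lra). nra. }
  lra.
Qed.

Lemma Phi_cont a : continuity_pt (fun u => Kc a * Ik a 0 u * (Kc a * Ik a 2 u) - Kc a * Ik a 1 u * (Kc a * Ik a 1 u)) 0.
Proof.
  assert (Hc : forall k, continuous (Ik a k) 0) by (intros; apply continuity_pt_filterlim, Ik_cont).
  apply continuity_pt_filterlim.
  apply (continuous_minus (K:=R_AbsRing) (V:=R_NormedModule)
     (fun u => Kc a * Ik a 0 u * (Kc a * Ik a 2 u)) (fun u => Kc a * Ik a 1 u * (Kc a * Ik a 1 u)));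
  apply (continuous_mult (K:=R_AbsRing)); apply (continuous_mult (K:=R_AbsRing)); auto;
  apply continuous_const.
Qed.

Theorem mainTheorem12 (a2 : R) (ha2 : 1 < a2) (h : R -> R)
  (hh : is_density_sum a2 h) :
  let c2 := 1 - / a2 in
  let p0 := / sqrt a2 in
  let p1 := / 2 * c2 * p0 in
  let p2 := 3 / 8 * c2 ^ 2 * p0 in
  exists h1 h2 : R -> R,
    (forall u, 0 < u -> derivable_pt_lim h u (h1 u) /\ derivable_pt_lim h1 u (h2 u)) /\
    right_lim0 (fun u => h u * h2 u - (h1 u) ^ 2) ((p0 * p2 - p1 ^ 2) / 16) /\
    (p0 * p2 - p1 ^ 2) / 16 > 0 /\
    ~ log_concave_pos h /\
    (forall F : R -> R, (forall u, 0 < u -> improper_int h 0 u (F u)) ->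
       log_concave_pos F).
Proof.
  intros c2 p0 p1 p2.
  set (K := Kc a2).
  pose proof (Kc_pos a2 ha2) as HK.
  exists (fun u => (- K) * Ik a2 1 u), (fun u => (- K) * - Ik a2 2 u).
  assert (Hloc : forall u, 0 < u -> locally u (fun t => Gf a2 t = h t)).
  { intros u Hu. apply (filter_imp (fun t => 0 < t)).
    - intros t Ht; symmetry; apply h_eq; auto.
    - apply open_gt; auto. }
  assert (HGd : forall u, is_derive (Gf a2) u ((- K) * Ik a2 1 u)).
  { intros u. replace ((- K) * Ik a2 1 u) with (K * - Ik a2 1 u) by ring.
    unfold Gf. apply Ik_derive_c. }
  assert (HD1 : forall u, 0 < u -> derivable_pt_lim h u ((- K) * Ik a2 1 u)).
  { intros u Hu. apply is_derive_Reals. apply is_derive_ext_loc with (Gf a2).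
    apply Hloc; auto. apply HGd. }
  assert (HD2 : forall u, is_derive (fun u => (- K) * Ik a2 1 u) u ((- K) * - Ik a2 2 u)).
  { intros u. apply Ik_derive_c. }
  assert (Hsq : 0 < sqrt a2) by (apply sqrt_lt_R0; lra).
  assert (HLval : (p0 * p2 - p1 ^ 2) / 16 = K * Ik a2 0 0 * (K * Ik a2 2 0) - K * Ik a2 1 0 * (K * Ik a2 1 0)).
  { rewrite I0_0, I1_0, I2_0 by auto. unfold K, Kc, p1, p2, c2, p0.
    assert (ra : sqrt a2 * sqrt a2 = a2) by (apply sqrt_sqrt; lra).
    pose proof PI_RGT_0.
    set (r := sqrt a2) in *. clearbody r. subst a2. field. split; lra. }
  assert (HLpos : (p0 * p2 - p1 ^ 2) / 16 > 0).
  { assert (Hc2 : 0 < c2).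
    { unfold c2. replace (1 - / a2) with ((a2 - 1) / a2) by (field; lra).
      apply Rdiv_lt_0_compat; lra. }
    assert (Hp0 : 0 < p0) by (unfold p0; apply Rinv_0_lt_compat; auto).
    replace ((p0 * p2 - p1 ^ 2) / 16) with (p0 * p0 * c2 * c2 / 128) by (unfold p1, p2; field).
    apply Rdiv_lt_0_compat; [|lra]. repeat apply Rmult_lt_0_compat; auto. }
  assert (HR : right_lim0 (fun u => h u * ((- K) * - Ik a2 2 u) - ((- K) * Ik a2 1 u) ^ 2)
                          ((p0 * p2 - p1 ^ 2) / 16)).
  { intros eps He. pose proof (Phi_cont a2) as HC.
    unfold continuity_pt, continue_in, limit1_in, limit_in in HC.
    destruct (HC eps He) as [al [Hal Hal']]. exists al. split; auto.
    intros u Hu. rewrite (h_eq a2 h u ha2 hh (proj1 Hu)). rewrite HLval.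
    specialize (Hal' u). simpl in Hal'. unfold R_dist in Hal'.
    fold K in Hal'. fold K.
    replace (K * Ik a2 0 u * (- K * - Ik a2 2 u) - (- K * Ik a2 1 u) ^ 2)
      with (K * Ik a2 0 u * (K * Ik a2 2 u) - K * Ik a2 1 u * (K * Ik a2 1 u)) by ring.
    apply Hal'. split. split; [exact I | apply Rlt_not_eq; lra].
    rewrite Rminus_0_r, Rabs_right; lra. }
  split; [|split; [exact HR|split; [exact HLpos|split]]].
  - intros u Hu. split; auto. apply is_derive_Reals, HD2.
  - intros LC. set (L := (p0 * p2 - p1 ^ 2) / 16) in *.
    destruct (HR L HLpos) as [d [Hd Hd']].
    assert (Hpos : forall u, 0 < u < d -> 0 < Gf a2 u * ((- K) * - Ik a2 2 u) - ((- K) * Ik a2 1 u) * ((- K) * Ik a2 1 u)).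
    { intros u Hu. specialize (Hd' u Hu). simpl in Hd'.
      rewrite (h_eq a2 h u ha2 hh (proj1 Hu)) in Hd'. unfold Gf. fold K in Hd'. fold K.
      apply Rabs_def2 in Hd'. simpl in Hd'. lra. }
    assert (HM := midpoint_convex (fun u => ln (Gf a2 u))
       (fun u => ((- K) * Ik a2 1 u) / Gf a2 u)
       (fun u => (((- K) * - Ik a2 2 u) * Gf a2 u - ((- K) * Ik a2 1 u) * ((- K) * Ik a2 1 u)) / (Gf a2 u ^ 2))
       (d / 2) (d / 4) ltac:(lra)).
    assert (2 * ln (Gf a2 (d / 2)) < ln (Gf a2 (d / 2 - d / 4)) + ln (Gf a2 (d / 2 + d / 4))).
    { apply HM. intros x Hx. pose proof (Gf_pos a2 x ha2) as HGx. split; [|split].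
      - apply is_derive_Reals.
        replace (- K * Ik a2 1 x / Gf a2 x) with (scal (- K * Ik a2 1 x) (/ Gf a2 x))
          by (unfold scal; simpl; unfold mult; simpl; unfold Rdiv; ring).
        apply (@is_derive_comp R_AbsRing R_NormedModule ln (Gf a2)). apply is_derive_ln; auto. apply HGd.
      - apply is_derive_Reals. apply (is_derive_div (fun u => - K * Ik a2 1 u) (Gf a2) x (- K * - Ik a2 2 x) (- K * Ik a2 1 x)); auto. lra.
      - apply Rdiv_lt_0_compat. specialize (Hpos x ltac:(lra)). lra.
        apply pow_lt; auto. }
    specialize (LC (d / 4) (3 * d / 4) (1 / 2) ltac:(lra) ltac:(lra) ltac:(lra)).
    replace (1 / 2 * (d / 4) + (1 - 1 / 2) * (3 * d / 4)) with (d / 2) in LC by field.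
    rewrite !(h_eq a2 h) in LC by (auto; lra).
    replace (d / 2 - d / 4) with (d / 4) in H by field.
    replace (d / 2 + d / 4) with (3 * d / 4) in H by field.
    unfold Gf in H. fold K in H. fold K in LC. lra.
  - intros F HF. apply (F_logconcave a2 h F ha2 hh HF).
Qed.
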